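(* For the influence maximization problem in the independent cascade model with full-adoption feedback, the adaptivity gap is at least $\frac{e}{e-1}$, even when the influence graph is a directed line; that is, $$\sup_{G\text{ a directed line},\,k\ge 1}\frac{\mathrm{OPT}_A(G,k)}{\mathrm{OPT}_N(G,k)}\ge \frac{e}{e-1}.$$
   Context: Independent cascade (IC) model: an influence graph is a directed graph $G=(V,E,p)$ with a probability $p_{uv}\in[0,1]$ on each edge $(u,v)\in E$. A directed line is an influence graph whose underlying graph is a directed path $v_1\to v_2\to\cdots\to v_m$. A live-edge graph (realization) $\phi$ is a random subgraph in which each edge $(u,v)$ is present (''live'') independently with probability $p_{uv}$; $\mathcal{P}$ denotes this distribution. For $S\subseteq V$, $\Gamma(S,\phi)$ is the set of nodes reachable from $S$ in $\phi$, and $\sigma(S)=\mathbb{E}_{\Phi\sim\mathcal{P}}[|\Gamma(S,\Phi)|]$. Full-adoption feedback: when a node $u$ is selected as a seed, one observes the live/blocked status of all out-going edges of every node reachable from $u$ in the realization. An adaptive policy $\pi$ maps the observations so far (seeds selected and their feedback) to the next node to select; $V(\pi,\phi)$ is the seed set it selects under realization $\phi$, and $\sigma(\pi)=\mathbb{E}_{\Phi\sim\mathcal{P}}[|\Gamma(V(\pi,\Phi),\Phi)|]$. $\Pi(k)$ is the set of policies with $|V(\pi,\phi)|\le k$ for every realization $\phi$. $\mathrm{OPT}_N(G,k)=\max_{|S|\le k}\sigma(S)$ and $\mathrm{OPT}_A(G,k)=\sup_{\pi\in\Pi(k)}\sigma(\pi)$. *)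

(* Defs.v *)
From HB Require Import structures.
From mathcomp Require Import all_boot all_order all_algebra.
From mathcomp Require Import boolp classical_sets reals.
From mathcomp Require Import sequences.
Set Implicit Arguments. Unset Strict Implicit. Unset Printing Implicit Defensive.
Import Order.TTheory GRing.Theory Num.Theory.
Local Open Scope ring_scope.

(* Directed line v_0 -> v_1 -> ... -> v_{m-1}: nodes are 'I_m, edges are
   'I_m.-1, edge i goes from node i to node i+1 (node i's unique out-edge).
   Probabilities are given by p : 'I_m.-1 -> R. *)

Section Line.
Variable (R : realType) (m : nat) (p : 'I_m.-1 -> R).

Definition node := 'I_m.
Definition edge := 'I_m.-1.

Definition realization := {ffun edge -> bool}.

Definition prob (phi : realization) : R :=
  \prod_(e : edge) (if phi e then p e else 1 - p e).

Definition reachn (phi : realization) (u v : nat) : bool :=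
  (u <= v)%N && [forall e : edge, ((u <= e)%N && (e < v)%N) ==> phi e].

Definition Gamma (S : {set node}) (phi : realization) : {set node} :=
  [set v : node | [exists u in S, reachn phi u v]].

Definition sigma (S : {set node}) : R :=
  \sum_(phi : realization) prob phi * (#|Gamma S phi|)%:R.

Definition OPT_N (k : nat) : R :=
  \big[Num.max/0]_(S : {set node} | (#|S| <= k)%N) sigma S.

(* Full-adoption feedback of seeding u under phi: the status of every
   out-going edge of every node reachable from u (None = not observed). *)
Definition feedback (phi : realization) (u : node) : {ffun edge -> option bool} :=
  [ffun e : edge => if reachn phi u e then Some (phi e) else None].

Definition history := seq (node * {ffun edge -> option bool}).

Definition policy := history -> option node.

Fixpoint run (pi : policy) (phi : realization) (n : nat) (h : history) : history :=
  match n with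
  | 0 => h
  | n'.+1 => match pi h with
             | None => h
             | Some u => run pi phi n' (rcons h (u, feedback phi u))
             end
  end.

Definition seeds (pi : policy) (n : nat) (phi : realization) : {set node} :=
  [set u : node | u \in map fst (run pi phi n [::])].

Definition sigmaA (pi : policy) (n : nat) : R :=
  \sum_(phi : realization) prob phi * (#|Gamma (seeds pi n phi) phi|)%:R.

Definition OPT_A (k : nat) : R :=
  sup [set x : R | exists (n : nat) (pi : policy),
         (forall phi, (#|seeds pi n phi| <= k)%N) /\ x = sigmaA pi n].

End Line.

(* Main.v *)
Require Import Defs.
From HB Require Import structures.
From mathcomp Require Import all_boot all_order all_algebra.
From mathcomp Require Import boolp classical_sets reals sequences exp.
From mathcomp Require Import zify ring lra.
Set Implicit Arguments. Unset Strict Implicit. Unset Printing Implicit Defensive.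
Import Order.TTheory GRing.Theory Num.Theory.
Local Open Scope ring_scope.

Section Gen.
Variables (R : realType) (m : nat) (p : 'I_m.-1 -> R).

Lemma E_prod (g : 'I_m.-1 -> bool -> R) :
  \sum_(phi : realization m) prob p phi * \prod_e g e (phi e) =
  \prod_e (p e * g e true + (1 - p e) * g e false).
Proof.
transitivity (\prod_(e : 'I_m.-1) \sum_(b : bool) (if b then p e else 1 - p e) * g e b).
  rewrite bigA_distr_bigA; apply: eq_bigr => phi _.
  by rewrite /prob -big_split.
by apply: eq_bigr => e _; rewrite big_bool.
Qed.

Lemma sum_prob : \sum_(phi : realization m) prob p phi = 1.
Proof.
have := E_prod (fun _ _ => 1).
rewrite [RHS]big1; last by move=> e _ /=; rewrite !mulr1 addrC subrK.
move=> <-; by apply: eq_bigr => phi _; rewrite big1 ?mulr1.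
Qed.

Hypothesis hp : forall e, 0 <= p e <= 1.

Lemma prob_ge0 phi : 0 <= prob p phi.
Proof.
apply: prodr_ge0 => e _; case: (phi e); have /andP[h0 h1] := hp e => //.
by rewrite subr_ge0.
Qed.

End Gen.

Lemma forall_prod (R : comPzRingType) (I : finType) (P : pred I) :
  ([forall i, P i]%:R : R) = \prod_i (P i)%:R.
Proof.
case: forallP => [H|H].
  by rewrite big1 // => i _; rewrite H.
have [i Hi] : exists i, ~~ P i.
  by apply/existsP; rewrite -negb_forall; apply/negP => /forallP.
by rewrite (bigD1 i) //= (negbTE Hi) mul0r.
Qed.
Section Adapt.
Variables (m : nat).

Definition nxt (phi : realization m) (u : nat) : nat :=
  if [pick e : 'I_m.-1 | reachn phi u e && ~~ phi e] is Some e then (e.+1)%N else m.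

Definition pol : policy m := fun h =>
  match rev h with
  | [::] => insub 0%N
  | (u, fb) :: _ => if [pick e : 'I_m.-1 | fb e == Some false] is Some e then insub (e.+1) else None
  end.

Definition nb (phi : realization m) (v : nat) : nat :=
  #|[set e : 'I_m.-1 | (e < v)%N && ~~ phi e]|.

Variable phi : realization m.

Lemma pol_rcons h u : pol (rcons h (u, feedback phi u)) = insub (nxt phi u).
Proof.
rewrite /pol rev_rcons /nxt.
rewrite (@eq_pick _ _ (fun e : 'I_m.-1 => reachn phi u e && ~~ phi e)); last first.
  by move=> e; rewrite ffunE; case: (reachn phi u e); case: (phi e).
case: pickP => [e _|_] //.
case: insubP => // x; rewrite ltnn //.
Qed.

Lemma pol_nil : (0 < m)%N -> exists x, pol [::] = Some x /\ val x = 0%N.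
Proof.
move=> H0; rewrite /pol /=; case: insubP => [x _ Hx|]; first by exists x.
by rewrite H0.
Qed.

Lemma nxt_le u : (nxt phi u <= m)%N.
Proof.
rewrite /nxt; case: pickP => [e _|_] //.
have := ltn_ord e; move: (e : nat) => x; case: (m) => //= n; lia.
Qed.

Lemma nxt_geq u : (u <= m)%N -> (u <= nxt phi u)%N.
Proof.
rewrite /nxt; case: pickP => [e /andP[/andP[ue _] _]|_] //.
move=> _; exact: leqW.
Qed.

Lemma nxt_reach u v : (u <= v)%N -> (v < nxt phi u)%N -> reachn phi u v.
Proof.
move=> uv; rewrite /reachn uv /=; rewrite /nxt; case: pickP => [e0 /andP[/andP[ue0 /forallP He0] _]|Hn] Hv.
  apply/forallP => e; apply/implyP => /andP[ue ev].
  by have := He0 e; rewrite ue /= (leq_trans ev) //.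
apply/forallP => e; apply/implyP => /andP[ue ev].
apply/negPn/negP => He.
have Hex : (u <= e)%N && ~~ phi e by rewrite ue He.
case: (@arg_minnP _ e (fun e' : 'I_m.-1 => (u <= e')%N && ~~ phi e') (fun e' : 'I_m.-1 => val e') Hex) => e1 /andP[ue1 He1] Hmin.
have := Hn e1; rewrite He1 andbT /reachn ue1 /=.
move/negP; apply; apply/forallP => e2; apply/implyP => /andP[ue2 e21].
apply/negPn/negP => He2.
by have := Hmin e2; rewrite ue2 He2 => /(_ isT); rewrite leqNgt e21.
Qed.

Lemma nb_mono u v : (u <= v)%N -> (nb phi u <= nb phi v)%N.
Proof.
move=> uv; rewrite /nb; apply: subset_leq_card; apply/fintype.subsetP => e; rewrite !inE => /andP[a ->].
by rewrite andbT (leq_trans a uv).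
Qed.

Lemma nb_nxt u v : (nxt phi u <= v)%N -> (v < m)%N -> (nb phi u < nb phi v)%N.
Proof.
rewrite /nxt; case: pickP => [e0 /andP[/andP[ue0 _] He0]|_] Hv Hvm; last by lia.
rewrite /nb; apply: proper_card; apply/properP; split.
  apply/fintype.subsetP => e; rewrite !inE => /andP[a ->].
  by rewrite andbT; lia.
exists e0; first by rewrite inE He0 andbT.
by rewrite inE He0 andbT -leqNgt.
Qed.

Definition sq i := iter i (nxt phi) 0%N.

Lemma iter_geq i u : (u <= m)%N -> (u <= iter i (nxt phi) u)%N.
Proof.
move=> um; elim: i => //= i IH.
apply: (leq_trans IH); apply: nxt_geq.
by case: i {IH} => //= i; apply: nxt_le.
Qed.

Lemma L1 i v : (sq i <= v)%N -> (v < m)%N -> (i <= nb phi v)%N.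
Proof.
elim: i v => // i IH v; rewrite /sq iterS => Hv Hvm.
have Hsm : (sq i <= m)%N by case: i {IH Hv} => //= i; apply: nxt_le.
have Hs := nxt_geq Hsm.
have := nb_nxt Hv Hvm.
have := IH (sq i) (leqnn _) ltac:(rewrite /sq in Hs *; lia).
rewrite /sq; lia.
Qed.

Lemma L2 j v : (v < sq j)%N -> exists2 i, (i < j)%N & (sq i <= v < sq i.+1)%N.
Proof.
elim: j => // j IH Hv.
case: (leqP (sq j) v) => H.
  by exists j => //; rewrite H.
by have [i Hi Hi2] := IH H; exists i => //; lia.
Qed.

Lemma L3a n h z : z \in map fst h -> z \in map fst (run pol phi n h).
Proof.
elim: n h => //= n IH h Hz.
case: (pol h) => // u; apply: IH.
by rewrite map_rcons mem_rcons inE Hz orbT.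
Qed.

Lemma L3 n h (x : 'I_m) i (y : 'I_m) : pol h = Some x -> (i < n)%N ->
  iter i (nxt phi) x = y -> y \in map fst (run pol phi n h).
Proof.
elim: n h x i => // n IH h x i Hh Hi Hy /=.
rewrite Hh.
case: i Hi Hy => [|i] Hi Hy.
  apply: L3a; rewrite map_rcons mem_rcons inE /=.
  by apply/orP; left; apply/eqP/val_inj.
rewrite iterSr in Hy.
have Hn : (nxt phi x < m)%N.
  have := iter_geq i (nxt_le x); rewrite Hy => H; exact: leq_ltn_trans H (ltn_ord y).
have := pol_rcons h x.
case: insubP => [x' _ Hx'|]; last by rewrite Hn.
move=> Hp; apply: (IH _ x' i Hp) => //.
by rewrite Hx'.
Qed.

Lemma L4 k (v : 'I_m) : (nb phi v < k)%N -> v \in Gamma (seeds pol k phi) phi.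
Proof.
move=> Hk.
have H1 : (v < sq k)%N.
  rewrite ltnNge; apply/negP => H; have := L1 H (ltn_ord v); lia.
have [i Hik /andP[Hi1 Hi2]] := L2 H1.
have Him : (sq i < m)%N by exact: leq_ltn_trans Hi1 (ltn_ord v).
have [x0 [Hx0 Hx0v]] := pol_nil (leq_ltn_trans (leq0n _) (ltn_ord v)).
rewrite inE; apply/existsP; exists (Ordinal Him); apply/andP; split.
  rewrite /seeds inE; apply: (L3 Hx0 Hik) => /=.
  by rewrite Hx0v.
apply: nxt_reach => //=.
Qed.

End Adapt.

Lemma adapt_bound (R : realType) (m : nat) (q s : R) (k : nat) :
  0 <= q <= 1 -> 1 <= s ->
  m%:R * (1 - (q + (1 - q) * s) ^+ m.-1 / s ^+ k) <=
  sigmaA (fun _ : 'I_m.-1 => q) (@pol m) k.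
Proof.
move=> /andP[q0 q1] s1.
set p := fun _ : 'I_m.-1 => q.
have hp : forall e, 0 <= p e <= 1 by move=> e; rewrite /p q0 q1.
have s0 : 0 < s by exact: lt_le_trans ltr01 s1.
set cc := q + (1 - q) * s.
have cc1 : 1 <= cc by rewrite /cc; nra.
have Hv : forall v : 'I_m, 1 - cc ^+ m.-1 / s ^+ k <=
    \sum_(phi : realization m) prob p phi * ((nb phi v < k)%N)%:R.
  move=> v.
  have H1 : forall phi : realization m, prob p phi * (1 - s ^+ nb phi v / s ^+ k) <=
      prob p phi * ((nb phi v < k)%N)%:R.
    move=> phi; apply: ler_wpM2l; first exact: prob_ge0.
    case: ltnP => H.
      rewrite (_ : (true%:R : R) = 1) // lerBlDr lerDl; apply: divr_ge0; apply: exprn_ge0; exact: ltW.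
    rewrite (_ : (false%:R : R) = 0) // subr_le0 ler_pdivlMr ?exprn_gt0 // mul1r; exact: ler_weXn2l.
  apply: le_trans (ler_sum _ (fun phi _ => H1 phi)).
  under eq_bigr do rewrite mulrBr mulr1.
  rewrite sumrB sum_prob lerD2l lerN2.
  under eq_bigr do rewrite mulrA.
  rewrite -mulr_suml; apply: ler_wpM2r; first by rewrite invr_ge0 exprn_ge0 // ltW.
  have Hs : forall phi : realization m, s ^+ nb phi v =
      \prod_e (fun (e : 'I_m.-1) (b : bool) => if (e < v)%N && ~~ b then s else 1) e (phi e).
    move=> phi; rewrite /nb -prodr_const big_mkcond /=; apply: eq_bigr => e _.
    by rewrite inE.
  under eq_bigr do rewrite Hs.
  have HE := E_prod p (fun (e : 'I_m.-1) (b : bool) => if (e < v)%N && ~~ b then s else 1).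
  simpl in HE; rewrite HE.
  have -> : cc ^+ m.-1 = \prod_(e : 'I_m.-1) cc by rewrite prodr_const card_ord.
  apply: ler_prod => e _; rewrite /p /= andbF andbT mulr1.
  case: (e < v)%N; rewrite /= ?mulr1.
    by apply/andP; split => //; rewrite -/cc; apply: le_trans cc1; exact: ler01.
  apply/andP; split; first by rewrite addrC subrK.
  by rewrite addrC subrK.
apply: le_trans (_ : \sum_(v : 'I_m) \sum_(phi : realization m) prob p phi * ((nb phi v < k)%N)%:R <= _).
  rewrite (_ : m%:R * _ = \sum_(v : 'I_m) (1 - cc ^+ m.-1 / s ^+ k)); last by rewrite sumr_const card_ord mulr_natl.
  by rewrite ler_sum // => v _; exact: Hv.
rewrite /sigmaA exchange_big /= ler_sum // => phi _.
rewrite -mulr_sumr ler_wpM2l ?prob_ge0 //.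
rewrite -sum1_card natr_sum [X in _ <= X]big_mkcond /= ler_sum // => v _.
case: ifP => Hin; first by case: ltnP.
case: ltnP => // H; exfalso; move/negP: Hin; apply; exact: L4.
Qed.

Section NonAdapt.
Variables (R : realType) (m : nat).

Definition nsb (S : {set 'I_m}) (u v : nat) : bool :=
  [forall w in S, ~~ ((u < w)%N && (w <= v)%N)].

Lemma P1 (S : {set 'I_m}) (phi : realization m) (v : 'I_m) :
  ((v \in Gamma S phi)%:R : R) <= \sum_(u in S) ((nsb S u v && reachn phi u v)%:R : R).
Proof.
case: (boolP (v \in Gamma S phi)) => H /=; last by apply: sumr_ge0 => u _; exact: ler0n.
move: H; rewrite inE => /existsP[u0 /andP[Hu0 Hr0]].
have HT : (u0 \in S) && (u0 <= v)%N by rewrite Hu0; case/andP: Hr0.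
case: (@arg_maxnP _ u0 (fun w : 'I_m => (w \in S) && (w <= v)%N) (fun w : 'I_m => val w) HT)
  => u /andP[HuS Huv] Hmax.
rewrite (bigD1 u) //= -[X in X <= _]addr0 lerD //; last by apply: sumr_ge0 => w _; exact: ler0n.
have -> : nsb S u v.
  apply/forallP => w; apply/implyP => Hw; apply/negP => /andP[uw wv].
  have := Hmax w; rewrite Hw wv => /(_ isT) h; move: uw; rewrite ltnNge => /negP; apply; exact: h.
have -> : reachn phi u v.
  rewrite /reachn Huv /=; apply/forallP => e; apply/implyP => /andP[ue ev].
  case/andP: Hr0 => _ /forallP /(_ e); rewrite ev andbT.
  have -> : (u0 <= e)%N by have := Hmax u0 HT; move=> h; exact: leq_trans h ue.
  by [].
by [].
Qed.

Lemma count_prod (q : R) N u v : (u <= v)%N -> (v <= N)%N ->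
  \prod_(e < N) (if (u <= e)%N && (e < v)%N then q else 1) = q ^+ (v - u).
Proof.
move=> uv vN.
set G := fun e : nat => if (u <= e)%N && (e < v)%N then q else 1.
rewrite -(big_mkord xpredT G).
rewrite (big_cat_nat (leq0n u) (leq_trans uv vN)) /=.
rewrite (big_cat_nat uv vN) /=.
have HA : \prod_(0 <= i < u) G i = 1.
  by rewrite big_nat_cond big1 // => i /andP[/andP[_ iu] _]; rewrite /G leqNgt iu.
have HC : \prod_(v <= i < N) G i = 1.
  by rewrite big_nat_cond big1 // => i /andP[/andP[vi _] _]; rewrite /G ltnNge vi andbF.
have HB : \prod_(u <= i < v) G i = q ^+ (v - u).
  by rewrite -prodr_const_nat; apply: eq_big_nat => i; rewrite /G => ->.
by rewrite HA HB HC mul1r mulr1.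
Qed.

Lemma P2 (q : R) (u v : nat) : 0 <= q <= 1 -> (v <= m.-1)%N ->
  \sum_(phi : realization m) prob (fun _ : 'I_m.-1 => q) phi * ((reachn phi u v)%:R : R) =
  ((u <= v)%N%:R : R) * q ^+ (v - u).
Proof.
move=> hq vm.
have Hr : forall phi : realization m, ((reachn phi u v)%:R : R) = ((u <= v)%N%:R : R) *
   \prod_e (fun (e : 'I_m.-1) (b : bool) => ((((u <= e)%N && (e < v)%N) ==> b) : nat)%:R : R) e (phi e).
  move=> phi; rewrite /reachn -mulnb natrM forall_prod //.
under eq_bigr do rewrite Hr mulrCA.
rewrite -mulr_sumr.
have HE := E_prod (fun _ : 'I_m.-1 => q) (fun (e : 'I_m.-1) (b : bool) => ((((u <= e)%N && (e < v)%N) ==> b) : nat)%:R : R).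
simpl in HE; rewrite HE.
case: (leqP u v) => uv; last by rewrite !mul0r.
rewrite -(count_prod q uv vm); congr (_ * _); apply: eq_bigr => e _.
case: ifP => _ /=; first by rewrite mulr1 mulr0 addr0.
by rewrite !mulr1 addrC subrK.
Qed.

Lemma P3 (S : {set 'I_m}) (v : 'I_m) :
  \sum_(u in S) ((nsb S u v && (u <= v)%N)%:R : R) <= 1.
Proof.
case: (pickP (fun u : 'I_m => (u \in S) && nsb S u v && (u <= v)%N)) => [u0|Hn].
  move=> /andP[/andP[Hu0 Hn0] Hv0].
  rewrite (bigD1 u0) //= Hn0 Hv0 big1 ?addr0 // => u /andP[HuS Hne].
  case: (boolP (nsb S u v && (u <= v)%N)) => // /andP[Hn1 Hv1].
  exfalso; case: (ltngtP u u0) => H.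
  - by move/forallP: Hn1 => /(_ u0); rewrite Hu0 H Hv0.
  - by move/forallP: Hn0 => /(_ u); rewrite HuS H Hv1.
  - by move/negP: Hne; apply; apply/eqP/val_inj.
rewrite big1 ?ler01 // => u Hu.
by have := Hn u; rewrite Hu /= => ->.
Qed.

Lemma P4 (u a : nat) (f : nat -> R) : (forall j, (j < a)%N -> 0 <= f j) ->
  \sum_(v < m) (if (u <= v)%N && (v < u + a)%N then f (v - u)%N else 0) <= \sum_(j < a) f j.
Proof.
move=> f0.
set G := fun v : nat => if (u <= v)%N && (v < u + a)%N then f (v - u)%N else 0.
have G0 : forall v, 0 <= G v.
  move=> v; rewrite /G; case: ifP => // /andP[H1 H2]; apply: f0; lia.
rewrite -(big_mkord xpredT G).
apply: le_trans (_ : \sum_(0 <= v < m + (u + a)) G v <= _).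
  rewrite (big_cat_nat (leq0n m) (leq_addr _ _)) /= lerDl; exact: sumr_ge0.
rewrite (big_cat_nat (leq0n u) (_ : (u <= m + (u + a))%N)); last by lia.
rewrite (big_cat_nat (leq_addr a u) (_ : (u + a <= m + (u + a))%N)); last by lia.
have HA : \sum_(0 <= i < u) G i = 0.
  by rewrite big_nat_cond big1 // => i /andP[/andP[_ iu] _]; rewrite /G leqNgt iu.
have HC : \sum_(u + a <= i < m + (u + a)) G i = 0.
  by rewrite big_nat_cond big1 // => i /andP[/andP[vi _] _]; rewrite /G ltnNge vi andbF.
rewrite /= HA HC add0r addr0.
rewrite -{1}(add0n u) big_addn addKn big_mkord; apply: ler_sum => j _.
rewrite /G; have := ltn_ord j; case: ifP; last by lia.
by move=> _ _; rewrite addnK.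
Qed.

Lemma nonadapt_bound (q : R) (k a : nat) (S : {set 'I_m}) :
  0 <= q <= 1 -> (#|S| <= k)%N -> (m <= a * k)%N ->
  sigma (fun _ : 'I_m.-1 => q) S <= k%:R * \sum_(j < a) q ^+ j.
Proof.
move=> hq Sk mak.
have [q0 q1] := andP hq.
set p := fun _ : 'I_m.-1 => q.
have hp : forall e, 0 <= p e <= 1 by move=> e; rewrite /p q0 q1.
set Q := q ^+ a.
set F := \sum_(j < a) q ^+ j.
have Hphi : forall j, (j < a)%N -> 0 <= q ^+ j - Q.
  by move=> j ja; rewrite subr_ge0 /Q ler_wiXn2l // ltnW.
apply: le_trans (_ : \sum_(v : 'I_m) \sum_(u in S) ((nsb S u v)%:R * (((u <= v)%N)%:R * q ^+ (v - u))) <= _).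
  rewrite /sigma.
  apply: le_trans (_ : \sum_(phi : realization m) prob p phi * \sum_(v : 'I_m) \sum_(u in S)
       (((nsb S u v)%:R : R) * (reachn phi u v)%:R) <= _).
    apply: ler_sum => phi _; apply: ler_wpM2l; first exact: prob_ge0.
    rewrite -sum1_card natr_sum big_mkcond /= ler_sum // => v _.
    apply: le_trans (_ : ((v \in Gamma S phi)%:R : R) <= _); first by case: ifP.
    apply: le_trans (P1 S phi v) _.
    by apply: ler_sum => u _; rewrite -natrM mulnb.
  under eq_bigr do rewrite mulr_sumr.
  rewrite exchange_big /=; apply: ler_sum => v _.
  under eq_bigr do rewrite mulr_sumr.
  rewrite exchange_big /=; apply: ler_sum => u _.
  under eq_bigr do rewrite mulrCA.
  rewrite -mulr_sumr P2 //.
  by have := ltn_ord v; move: (v : nat) => x; case: (m) => //= n; lia.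
apply: le_trans (_ : \sum_(v : 'I_m) \sum_(u in S) (Q * ((nsb S u v && (u <= v)%N)%:R) +
    (if (u <= v)%N && (v < u + a)%N then q ^+ (v - u)%N - Q else 0)) <= _).
  apply: ler_sum => v _; apply: ler_sum => u _.
  case: (boolP (nsb S u v)) => Hn; case: (leqP u v) => Huv /=; rewrite ?mulr0n ?mulr1n.
  - rewrite !mul1r mulr1.
    case: ltnP => Ha /=.
      by rewrite addrC subrK.
    rewrite addr0 /Q ler_wiXn2l //; lia.
  - by rewrite !(mul0r, mulr0, addr0).
  - rewrite !(mul0r, mulr0, add0r); case: ltnP => // H2; apply: Hphi; lia.
  - by rewrite !(mul0r, mulr0, addr0).
under eq_bigr do rewrite big_split /=.
rewrite big_split /=.
have H1 : \sum_(v : 'I_m) \sum_(u in S) Q * ((nsb S u v && (u <= v)%N)%:R) <= Q * m%:R.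
  rewrite (_ : Q * m%:R = \sum_(v : 'I_m) Q); last by rewrite sumr_const card_ord mulr_natr.
  apply: ler_sum => v _.
  rewrite -mulr_sumr -[X in _ <= X]mulr1 ler_wpM2l ?exprn_ge0 //; exact: P3.
have H2 : \sum_(v : 'I_m) \sum_(u in S) (if (u <= v)%N && (v < u + a)%N then q ^+ (v - u)%N - Q else 0)
   <= #|S|%:R * (F - a%:R * Q).
  rewrite exchange_big /= mulr_natl -sumr_const ler_sum // => u _.
  rewrite (_ : a%:R * Q = \sum_(j < a) Q); last by rewrite sumr_const card_ord mulr_natl.
  rewrite /F -sumrB.
  exact: (@P4 u a (fun j => q ^+ j - Q) Hphi).
have HD : 0 <= F - a%:R * Q.
  rewrite (_ : a%:R * Q = \sum_(j < a) Q); last by rewrite sumr_const card_ord mulr_natl.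
  rewrite /F -sumrB.
  by apply: sumr_ge0 => j _; apply: Hphi.
have Hm : (m%:R : R) <= a%:R * k%:R by rewrite -natrM ler_nat.
have HS : (#|S|%:R : R) <= k%:R by rewrite ler_nat.
have Q0 : 0 <= Q by rewrite /Q exprn_ge0.
apply: le_trans (lerD H1 H2) _.
rewrite -/F; nra.
Qed.

End NonAdapt.
Section NumLemmas.
Variable R : realType.

Lemma geom (q : R) n : (\sum_(j < n) q ^+ j) * (1 - q) = 1 - q ^+ n.
Proof.
elim: n => [|n IH]; first by rewrite big_ord0 mul0r expr0 subrr.
by rewrite big_ord_recr /= mulrDl IH exprS; ring.
Qed.

Lemma bern_up (x : R) n : 0 <= x -> (1 + x) ^+ n * (1 - n%:R * x) <= 1.
Proof.
move=> x0; elim: n => [|n IH]; first by rewrite expr0 mul0r subr0 mul1r.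
apply: le_trans IH; rewrite exprS mulrS.
have y0 : 0 <= (1 + x) ^+ n by apply: exprn_ge0; apply: addr_ge0 => //; exact: ler01.
set y := (1 + x) ^+ n in y0 *.
have N0 : (0 : R) <= n%:R by exact: ler0n.
have H : 0 <= y * (x * x) * (1 + n%:R) by apply: mulr_ge0; [apply: mulr_ge0 => //; exact: mulr_ge0 | lra].
nra.
Qed.

Lemma bern_low (d : R) n : 0 <= d -> 1 + n%:R * d <= (1 + d) ^+ n.
Proof.
move=> d0; elim: n => [|n IH]; first by rewrite expr0 mul0r addr0.
rewrite exprS mulrS.
have H : 0 <= n%:R * d by apply: mulr_ge0 => //; exact: ler0n.
nra.
Qed.

Lemma e_bound n : (0 < n)%N -> (1 + n%:R^-1) ^+ n <= expR (1 : R).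
Proof.
move=> n0.
have -> : expR (1 : R) = expR (n%:R^-1) ^+ n.
  by rewrite -expRM_natr mulVf // pnatr_eq0 -lt0n.
apply: lerXn2r.
- by rewrite nnegrE addr_ge0 // invr_ge0 ler0n.
- by rewrite nnegrE ltW // expR_gt0.
- exact: expR_ge1Dx.
Qed.

Lemma num_N n : (0 < n)%N ->
  \sum_(j < n) (n%:R / n.+1%:R : R) ^+ j <= n.+1%:R * (1 - (expR (1:R))^-1).
Proof.
move=> n0.
set q : R := n%:R / n.+1%:R.
have N0 : (0 : R) < n%:R by rewrite ltr0n.
have N1 : (n.+1%:R : R) = n%:R + 1 by rewrite mulrS addrC.
have Hq1 : 1 - q = n.+1%:R^-1.
  rewrite /q N1; field; lra.
have HF : \sum_(j < n) q ^+ j = n.+1%:R * (1 - q ^+ n).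
  rewrite -geom Hq1 mulrA mulrC mulrA mulVf ?mul1r // pnatr_eq0 //.
rewrite HF ler_wpM2l ?ler0n // lerD2l lerN2.
have Hqq : q * (1 + n%:R^-1) = 1 by rewrite /q N1; field; lra.
have He := e_bound n0.
have Hqn : q ^+ n * (1 + n%:R^-1) ^+ n = 1 by rewrite -exprMn Hqq expr1n.
have E0 : 0 < expR (1 : R) by exact: expR_gt0.
have q0 : 0 <= q by rewrite /q divr_ge0 // ler0n.
rewrite -div1r ler_pdivrMr //.
apply: le_trans (_ : q ^+ n * (1 + n%:R^-1) ^+ n <= _); first by rewrite Hqn.
by rewrite ler_wpM2l ?exprn_ge0.
Qed.
Lemma num_A n k (q s : R) : (0 < n)%N -> k = (4 * n ^ 2 * n.+1)%N ->
  q = n%:R / n.+1%:R -> s = 1 + (2 * n%:R)^-1 ->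
  (q + (1 - q) * s) ^+ (k * n).-1 / s ^+ k <= n.+1%:R^-1.
Proof.
move=> n0 kE -> ->.
set NN : R := n%:R.
have N0 : 0 < NN by rewrite ltr0n.
have N1 : (n.+1%:R : R) = NN + 1 by rewrite mulrS addrC.
have kR : (k%:R : R) = 4 * NN ^+ 2 * (NN + 1).
  by rewrite kE !natrM N1 -/NN expr2.
clear kE.
set x : R := (2 * NN * (NN + 1))^-1.
have x0 : 0 <= x by rewrite /x invr_ge0; nra.
rewrite N1.
have Hcc : (NN / (NN + 1) : R) + (1 - NN / (NN + 1)) * (1 + (2 * NN)^-1) = 1 + x by rewrite /x; field; nra.
rewrite Hcc.
set g : R := (2 * NN + 2) / (2 * NN + 1).
have g0 : 0 < g by rewrite /g divr_gt0; lra.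
set d : R := (4 * NN * (NN + 1))^-1.
have d0 : 0 <= d by rewrite /d invr_ge0; nra.
have Hs : 1 + (2 * NN)^-1 = g * (1 + d) by rewrite /g /d; field; nra.
have s0 : 0 < 1 + (2 * NN)^-1 by rewrite Hs; apply: mulr_gt0 => //; lra.
have Hkd : k%:R * d = NN by rewrite kR /d; field; nra.
have H1 : (1 + x) ^+ (k * n).-1 <= (1 + x) ^+ (k * n).
  by apply: ler_weXn2l; [lra | exact: leq_pred].
have H2 : (1 + x) ^+ n <= g.
  have := bern_up n x0; rewrite -/NN.
  have -> : 1 - NN * x = g^-1 by rewrite /x /g; field; nra.
  by rewrite ler_pdivrMr // mul1r.
have H3 : (1 + x) ^+ (k * n) <= g ^+ k.
  rewrite mulnC exprM; apply: lerXn2r => //; rewrite nnegrE ?exprn_ge0 //; [lra | exact: ltW].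
have H4 : 1 + NN <= (1 + d) ^+ k by rewrite -Hkd; exact: bern_low.
rewrite ler_pdivrMr ?exprn_gt0 // Hs exprMn.
apply: le_trans H1 _; apply: le_trans H3 _.
have gk : 0 < g ^+ k by exact: exprn_gt0.
rewrite mulrA [_^-1 * _]mulrC -mulrA.
rewrite -[X in X <= _]mulr1 ler_pM2l //.
by rewrite ler_pdivlMl ?mulr1; lra.
Qed.

End NumLemmas.

Lemma size_run (m : nat) (pi : policy m) phi n h : (size (run pi phi n h) <= size h + n)%N.
Proof.
elim: n h => [|n IH] h /=; first by rewrite addn0.
case: (pi h) => [u|]; last by rewrite leq_addr.
apply: leq_trans (IH _) _; rewrite size_rcons; lia.
Qed.

Lemma card_seeds (m : nat) (pi : policy m) n phi : (#|seeds pi n phi| <= n)%N.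
Proof.
rewrite /seeds cardsE; apply: leq_trans (card_size _) _.
rewrite size_map; exact: (size_run pi phi n [::]).
Qed.

Lemma sigmaA_le (R : realType) (m : nat) (p : 'I_m.-1 -> R) (pi : policy m) n :
  (forall e, 0 <= p e <= 1) -> sigmaA p pi n <= m%:R.
Proof.
move=> hp.
have H : (m%:R : R) = \sum_(phi : realization m) prob p phi * m%:R by rewrite -mulr_suml sum_prob mul1r.
rewrite [X in _ <= X]H /sigmaA ler_sum // => phi _.
rewrite ler_wpM2l ?prob_ge0 // ler_nat.
by rewrite -[X in (_ <= X)%N](card_ord m) max_card.
Qed.

Lemma sigma_ge1 (R : realType) (m : nat) (p : 'I_m.-1 -> R) (w : 'I_m) (S : {set 'I_m}) :
  (forall e, 0 <= p e <= 1) -> w \in S -> 1 <= sigma p S.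
Proof.
move=> hp wS; rewrite /sigma.
have H : (1 : R) = \sum_(phi : realization m) prob p phi by rewrite sum_prob.
rewrite [X in X <= _]H ler_sum // => phi _.
rewrite -[X in X <= _]mulr1 ler_wpM2l ?prob_ge0 // ler1n card_gt0.
apply/set0Pn; exists w; rewrite inE; apply/existsP; exists w; rewrite wS /reachn leqnn /=.
by apply/forallP => e; apply/implyP => /andP[a b]; lia.
Qed.

Lemma fin_ineq (R : realType) (NN rho : R) : 1 <= NN -> rho < 1 -> 3 < NN * (1 - rho) ->
  (NN + 1) * rho * (NN + 1) < NN * NN.
Proof.
move=> h1 h2 h3.
have h4 : 0 < (1 - rho) * (2 * NN + 1) by apply: mulr_gt0; lra.
have h5 : 0 < (NN * (1 - rho) - 3) * NN by apply: mulr_gt0; lra.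
nra.
Qed.

Unset Implicit Arguments.

Theorem theorem4 (R : realType) (c : R) :
  c < expR 1 / (expR 1 - 1) ->
  exists (m : nat) (p : 'I_m.-1 -> R) (k : nat),
    (forall e, 0 <= p e <= 1) /\ (1 <= k)%N /\ 0 < OPT_N p k /\
    c * OPT_N p k < OPT_A p k.
Proof.
move=> hc.
set e := expR (1 : R).
have e2 : 2 <= e by have := expR_ge1Dx (1 : R).
have e1 : 0 < e - 1 by lra.
have e0 : 0 < e by lra.
set rho := c * (e - 1) / e.
have rho1 : rho < 1.
  rewrite /rho ltr_pdivrMr // mul1r; move: hc; rewrite ltr_pdivlMr //.
set y := Num.max 0 (3 / (1 - rho)).
have y0 : 0 <= y by rewrite /y le_max lexx.
have y3 : 3 / (1 - rho) <= y by rewrite /y le_max lexx orbT.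
set n := (Num.Def.archi_bound y).+1.
have n0 : (0 < n)%N by [].
have ny : y < n%:R.
  apply: lt_le_trans (archi_boundP y0) _; rewrite ler_nat /n; exact: leqnSn.
set NN : R := n%:R.
have NN1 : 1 <= NN by rewrite /NN ler1n.
have Hn3 : 3 < NN * (1 - rho).
  have : 3 / (1 - rho) < NN by apply: le_lt_trans y3 ny.
  by rewrite ltr_pdivrMr // subr_gt0.
set k := (4 * n ^ 2 * n.+1)%N.
have k1 : (1 <= k)%N by rewrite /k; lia.
set m := (k * n)%N.
set q : R := n%:R / n.+1%:R.
set s : R := 1 + (2 * n%:R)^-1.
have N1 : (n.+1%:R : R) = NN + 1 by rewrite mulrS addrC.
have hq : 0 <= q <= 1.
  rewrite /q N1 -/NN; apply/andP; split; first by apply: divr_ge0; lra.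
  by rewrite ler_pdivrMr; lra.
have s1 : 1 <= s by rewrite /s lerDl invr_ge0; rewrite -/NN; lra.
set p := fun _ : 'I_m.-1 => q.
have hp : forall x, 0 <= p x <= 1 by move=> x; exact: hq.
exists m, p, k.
have K0 : (0 : R) < k%:R by rewrite ltr0n.
have HN : OPT_N p k <= k%:R * (n.+1%:R * (1 - e^-1)).
  rewrite /OPT_N; apply: bigmax_le.
    apply: mulr_ge0; first exact: ltW.
    apply: mulr_ge0; first exact: ler0n.
    rewrite subr_ge0 invf_le1 //; lra.
  move=> S HS; apply: le_trans (nonadapt_bound (a := n) hq HS _) _.
    by rewrite /m mulnC.
  apply: ler_wpM2l; first exact: ltW.
  exact: num_N.
have m0 : (0 < m)%N by rewrite /m muln_gt0 k1 n0.
have HN0 : 0 < OPT_N p k.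
  apply: lt_le_trans ltr01 _.
  apply: le_trans (_ : sigma p [set Ordinal m0] <= _).
    by apply: (sigma_ge1 (w := Ordinal m0)) => //; rewrite inE.
  rewrite /OPT_N; apply: le_bigmax_cond; by rewrite cards1.
have HA : m%:R * (1 - n.+1%:R^-1) <= OPT_A p k.
  apply: le_trans (_ : sigmaA p (@pol m) k <= _).
    apply: le_trans (adapt_bound m k hq s1).
    apply: ler_wpM2l; first exact: ler0n.
    rewrite lerD2l lerN2; exact: num_A.
  apply: ub_le_sup.
    exists m%:R => x [n1 [pi [_ ->]]]; exact: sigmaA_le.
  exists k, (@pol m); split => //; exact: card_seeds.
split => //; split => //; split => //.
have Hm : (m%:R : R) = k%:R * NN by rewrite /m natrM.
rewrite Hm N1 in HA; rewrite N1 in HN.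
have HA' : k%:R * (NN * NN / (NN + 1)) <= OPT_A p k.
  apply: le_trans HA; rewrite -mulrA.
  have E : forall z : R, 1 <= z -> z * (z / (z + 1)) = z * (1 - (z + 1)^-1).
    by move=> z z1; field; lra.
  by rewrite E // mulrA.
have Hpos : 0 < k%:R * (NN * NN / (NN + 1)).
  apply: mulr_gt0 => //; apply: divr_gt0; [apply: mulr_gt0|]; lra.
case: (lerP c 0) => hc0.
  apply: le_lt_trans (_ : c * OPT_N p k <= 0) _; first by apply: mulr_le0_ge0 => //; exact: ltW.
  exact: lt_le_trans Hpos HA'.
apply: le_lt_trans (_ : c * OPT_N p k <= c * (k%:R * ((NN + 1) * (1 - e^-1)))) _.
  by apply: ler_wpM2l => //; exact: ltW.
apply: lt_le_trans HA'.
have -> : c * (k%:R * ((NN + 1) * (1 - e^-1))) = k%:R * ((NN + 1) * rho).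
  have E : forall (z w cc ee : R), 0 < ee -> cc * (w * (z * (1 - ee^-1))) = w * (z * (cc * (ee - 1) / ee)).
    by move=> z w cc ee ee0; field; lra.
  by rewrite E.
rewrite ltr_pM2l // ltr_pdivlMr; last by lra.
exact: fin_ineq.
Qed.
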